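(* Let $H_1,\dots,H_K$ be Hermitian operators and $V_1,\dots,V_K$ unitaries on a finite-dimensional Hilbert space, let $\mathcal S:\{1,\dots,K\}\to\{1,2\}$ assign to each generator one of two real parameters $\theta_1,\theta_2$, let $U(\theta_1,\theta_2)=\prod_{k=1}^KV_ke^{-i\theta_{\mathcal S(k)}H_k}$ (ordered product, $k=1$ leftmost), and $\mathcal{E}_{\theta_1,\theta_2}(A)=U(\theta_1,\theta_2)^\dagger AU(\theta_1,\theta_2)$ for an operator $A$. Then for all integers $p_1,p_2\ge0$ and all $\phi_1,\phi_2\in\mathbb{R}$, $$\left\|\frac{\partial^{p_1+p_2}}{\partial\theta_1^{p_1}\partial\theta_2^{p_2}}\mathcal{E}_{\theta_1,\theta_2}(A)\Big|_{\theta_1=\phi_1,\theta_2=\phi_2}\right\|_\infty\le\Big(\sum_{l\in\mathcal S^{-1}(1)}2\omega^{(\max)}(H_l)\Big)^{p_1}\Big(\sum_{l\in\mathcal S^{-1}(2)}2\omega^{(\max)}(H_l)\Big)^{p_2}\|A\|_\infty.$$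
   Context: $\omega^{(\max)}(H)=\lambda_{\max}(H)-\lambda_{\min}(H)$ (largest minus smallest eigenvalue); $\|\cdot\|_\infty$ is the operator norm; $\mathcal S^{-1}(j)=\{l:\mathcal S(l)=j\}$. *)

(* Defs.v *)
From mathcomp Require Import all_boot all_algebra.
From mathcomp Require Import complex.
From mathcomp Require Import boolp classical_sets reals topology normedtype sequences derive.
Import GRing.Theory Num.Theory numFieldNormedType.Exports.

Set Implicit Arguments.
Unset Strict Implicit.
Unset Printing Implicit Defensive.

Local Open Scope ring_scope.
Local Open Scope complex_scope.
Local Open Scope ring_scope.
Local Open Scope sesquilinear_scope.

Section Defs.
Variable R : realType.
Local Notation C := R[i].

Definition reC (z : C) : R := @complex.Re R z.
Definition imC (z : C) : R := @complex.Im R z.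

(* Hermitian matrices are [H \is hermsymmx] (sesquilinear.v: H == H ^t conjC),
   unitary matrices are [V \is unitarymx] (spectral.v: V *m V ^t* == 1),
   and the adjoint is [M ^t*] (sesquilinear_scope). *)

Definition exp_psum n (M : 'M[C]_n) (N : nat) : 'M[C]_n :=
  \sum_(k < N) ((k`!)%:R)^-1 *: M ^+ k.

Definition expm n (M : 'M[C]_n) : 'M[C]_n :=
  \matrix_(a, b) (limn (fun N => reC (exp_psum M N a b))
                  +i* limn (fun N => imC (exp_psum M N a b))).

(* U(th1,th2) = prod_{k=1}^K V_k exp(-i th_{S(k)} H_k), k = 1 leftmost.
   The two parameters are indexed by 'I_2: ord0 <-> theta_1, ord_max <-> theta_2. *)
Definition Uop n K (H V : 'I_K -> 'M[C]_n) (S : 'I_K -> 'I_2) (th1 th2 : R)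
  : 'M[C]_n :=
  \prod_(k < K)
     (V k * expm ((- ('i * (if S k == ord0 then th1 else th2)%:C)) *: H k)).

Definition chan n K (H V : 'I_K -> 'M[C]_n) (S : 'I_K -> 'I_2) (A : 'M[C]_n)
  (th1 th2 : R) : 'M[C]_n :=
  (Uop H V S th1 th2) ^t* *m A *m Uop H V S th1 th2.

Definition dmx n (F : R -> 'M[C]_n) (t : R) : 'M[C]_n :=
  \matrix_(a, b) (derive1 (fun s => reC (F s a b)) t
                  +i* derive1 (fun s => imC (F s a b)) t).

Definition pd1 n (G : R -> R -> 'M[C]_n) : R -> R -> 'M[C]_n :=
  fun t1 t2 => dmx (fun s => G s t2) t1.
Definition pd2 n (G : R -> R -> 'M[C]_n) : R -> R -> 'M[C]_n :=
  fun t1 t2 => dmx (G t1) t2.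

Definition pderiv n (p1 p2 : nat) (G : R -> R -> 'M[C]_n) : R -> R -> 'M[C]_n :=
  iter p1 (@pd1 n) (iter p2 (@pd2 n) G).

Definition vnorm n (x : 'cV[C]_n) : R :=
  Num.sqrt (\sum_(a < n) (reC (x a 0) ^+ 2 + imC (x a 0) ^+ 2)).

Definition opnorm n (M : 'M[C]_n) : R :=
  sup [set r : R | exists x : 'cV[C]_n, vnorm x = 1 /\ r = vnorm (M *m x)].

(* omega_max(H) = lambda_max(H) - lambda_min(H) (eigenvalues of a Hermitian
   matrix are real) *)
Definition spec_real n (M : 'M[C]_n) : set R :=
  [set r : R | eigenvalue M (r%:C)].

Definition omega_max n (M : 'M[C]_n) : R :=
  sup (spec_real M) - inf (spec_real M).

End Defs.

(* Main.v *)
Require Import Defs.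
From mathcomp Require Import all_boot all_algebra.
From mathcomp Require Import complex.
From mathcomp Require Import boolp classical_sets reals topology normedtype sequences derive.
Import GRing.Theory Num.Theory numFieldNormedType.Exports.
Local Open Scope ring_scope.

From mathcomp Require Import all_order.
From mathcomp Require Import functions trigo realfun.
From mathcomp Require Import ring lra.

Module Helpers.
Import Order.TTheory GRing.Theory Num.Theory numFieldNormedType.Exports.
Set Implicit Arguments.
Unset Strict Implicit.
Unset Printing Implicit Defensive.
Local Open Scope ring_scope.
Local Open Scope complex_scope.
Local Open Scope ring_scope.
Local Open Scope sesquilinear_scope.

Section Norms.
Variable R : realType.
Local Notation C := R[i].

Definition nr (z : C) : R := reC z ^+ 2 + imC z ^+ 2.

Lemma reCD (x y : C) : reC (x + y) = reC x + reC y.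
Proof. by case: x => a b; case: y => c d. Qed.
Lemma imCD (x y : C) : imC (x + y) = imC x + imC y.
Proof. by case: x => a b; case: y => c d. Qed.
Lemma reCN (x : C) : reC (- x) = - reC x.
Proof. by case: x => a b. Qed.
Lemma imCN (x : C) : imC (- x) = - imC x.
Proof. by case: x => a b. Qed.
Lemma reC0 : reC (0 : C) = 0. Proof. by []. Qed.
Lemma imC0 : imC (0 : C) = 0. Proof. by []. Qed.
Lemma reCM (x y : C) : reC (x * y) = reC x * reC y - imC x * imC y.
Proof. by case: x => a b; case: y => c d. Qed.
Lemma imCM (x y : C) : imC (x * y) = reC x * imC y + imC x * reC y.
Proof. by case: x => a b; case: y => c d. Qed.
Lemma reCJ (x : C) : reC (x^*) = reC x. Proof. by case: x. Qed.
Lemma imCJ (x : C) : imC (x^*) = - imC x. Proof. by case: x. Qed.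
Lemma reC_real (r : R) : reC (r%:C) = r. Proof. by []. Qed.
Lemma imC_real (r : R) : imC (r%:C) = 0. Proof. by []. Qed.
Lemma reC_sum (I : Type) (s : seq I) (P : pred I) (F : I -> C) :
  reC (\sum_(i <- s | P i) F i) = \sum_(i <- s | P i) reC (F i).
Proof. by elim/big_rec2: _ => // i y1 y2 _ <-; rewrite reCD. Qed.
Lemma imC_sum (I : Type) (s : seq I) (P : pred I) (F : I -> C) :
  imC (\sum_(i <- s | P i) F i) = \sum_(i <- s | P i) imC (F i).
Proof. by elim/big_rec2: _ => // i y1 y2 _ <-; rewrite imCD. Qed.
Lemma C_eta (z : C) : z = (reC z) +i* (imC z). Proof. by case: z. Qed.
Lemma C_ext (z w : C) : reC z = reC w -> imC z = imC w -> z = w.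
Proof. by case: z => a b; case: w => c d /= -> ->. Qed.

Lemma nr_ge0 z : 0 <= nr z.
Proof. by rewrite /nr addr_ge0 // sqr_ge0. Qed.
Lemma nrM z w : nr (z * w) = nr z * nr w.
Proof. rewrite /nr reCM imCM; ring. Qed.
Lemma nrJ z : nr (z^*) = nr z.
Proof. by rewrite /nr reCJ imCJ sqrrN. Qed.
Lemma nr_real (r : R) : nr (r%:C) = r ^+ 2.
Proof. by rewrite /nr reC_real imC_real expr0n addr0. Qed.
Lemma nr_eq0 z : nr z = 0 -> z = 0.
Proof.
rewrite /nr => /eqP; rewrite paddr_eq0 ?sqr_ge0 // !sqrf_eq0 => /andP[/eqP a /eqP b].
by apply: C_ext.
Qed.
Lemma nr_i : nr ('i : C) = 1.
Proof. by rewrite /nr /=; rewrite expr0n expr1n add0r. Qed.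
Lemma nrN z : nr (- z) = nr z.
Proof. by rewrite /nr reCN imCN !sqrrN. Qed.
Lemma conjM_nr (z : C) : z^* * z = (nr z)%:C.
Proof. apply: C_ext; rewrite ?reCM ?imCM ?reCJ ?imCJ /nr /=; ring. Qed.

Section Vec.
Variable n : nat.
Implicit Types x y : 'cV[C]_n.

Definition nsq x : R := \sum_(a < n) nr (x a 0).
Lemma vnormE x : vnorm x = Num.sqrt (nsq x). Proof. by []. Qed.
Lemma nsq_ge0 x : 0 <= nsq x.
Proof. by apply: sumr_ge0 => a _; exact: nr_ge0. Qed.
Lemma vnorm_ge0 x : 0 <= vnorm x.
Proof. exact: sqrtr_ge0. Qed.
Lemma vnorm_sqr x : vnorm x ^+ 2 = nsq x.
Proof. by rewrite vnormE sqr_sqrtr // nsq_ge0. Qed.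

Lemma nsq_scale c x : nsq (c *: x) = nr c * nsq x.
Proof. by rewrite /nsq mulr_sumr; apply: eq_bigr => a _; rewrite mxE nrM. Qed.
Lemma vnorm_scale c x : vnorm (c *: x) = Num.sqrt (nr c) * vnorm x.
Proof. by rewrite !vnormE nsq_scale sqrtrM // nr_ge0. Qed.

Definition ip x y : R := \sum_(a < n) (reC (x a 0) * reC (y a 0) + imC (x a 0) * imC (y a 0)).

Lemma nsq_lin (c d : R) x y :
  nsq (c%:C *: x + d%:C *: y) = c ^+ 2 * nsq x + 2 * c * d * ip x y + d ^+ 2 * nsq y.
Proof.
rewrite /nsq /ip !mulr_sumr -!big_split /=; apply: eq_bigr => a _.
rewrite !mxE /nr reCD imCD !(reCM, imCM) /=; ring.
Qed.

Lemma nsq0 x : nsq x = 0 -> x = 0.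
Proof.
move=> /eqP; rewrite psumr_eq0; last by move=> a _; exact: nr_ge0.
move=> /allP H; apply/matrixP => a b; rewrite ord1 mxE.
by apply: nr_eq0; apply/eqP; apply: H; rewrite mem_index_enum.
Qed.

Lemma ip0l y : ip 0 y = 0.
Proof. by rewrite /ip big1 // => a _; rewrite mxE /=; ring. Qed.

Lemma CS x y : ip x y ^+ 2 <= nsq x * nsq y.
Proof.
have [X0|Xpos] := eqVneq (nsq x) 0.
  by rewrite X0 (nsq0 X0) ip0l expr0n mul0r.
have Xg : 0 < nsq x by rewrite lt0r Xpos nsq_ge0.
have := nsq_ge0 ((- ip x y)%:C *: x + (nsq x)%:C *: y).
rewrite nsq_lin => H.
have : 0 <= nsq x * (nsq x * nsq y - ip x y ^+ 2) by nra.
by rewrite pmulr_rge0 // subr_ge0.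
Qed.

Lemma vnorm_triangle x y : vnorm (x + y) <= vnorm x + vnorm y.
Proof.
have e : x + y = 1%:C *: x + 1%:C *: y by rewrite !scale1r.
rewrite -ler_sqr ?nnegrE ?addr_ge0 ?vnorm_ge0 // vnorm_sqr e nsq_lin sqrrD !vnorm_sqr.
have h1 : ip x y <= vnorm x * vnorm y.
  have := CS x y; rewrite -!vnorm_sqr -exprMn => h.
  have : `|ip x y| <= vnorm x * vnorm y.
    by rewrite -ler_sqr ?nnegrE ?normr_ge0 ?mulr_ge0 ?vnorm_ge0 // real_normK // num_real.
  by apply: le_trans; exact: ler_norm.
rewrite expr1n !mul1r mulr1. nra.
Qed.

Lemma vnorm0 : vnorm (0 : 'cV[C]_n) = 0.
Proof. by rewrite vnormE /nsq big1 ?sqrtr0 // => a _; rewrite mxE /nr /= expr0n addr0. Qed.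

Lemma vnorm_sum (I : Type) (s : seq I) (F : I -> 'cV[C]_n) :
  vnorm (\sum_(i <- s) F i) <= \sum_(i <- s) vnorm (F i).
Proof.
elim: s => [|i s IH]; first by rewrite !big_nil vnorm0.
rewrite !big_cons; apply: le_trans (vnorm_triangle _ _) _; exact: lerD.
Qed.

Lemma nsq_adj x : nsq x = reC ((x ^t* *m x) 0 0).
Proof.
rewrite /nsq !mxE reC_sum; apply: eq_bigr => a _.
by rewrite !mxE conjM_nr reC_real.
Qed.

Lemma vnorm_unitary (U : 'M[C]_n) x : U ^t* *m U = 1%:M -> vnorm (U *m x) = vnorm x.
Proof.
move=> HU; rewrite !vnormE !nsq_adj; congr (Num.sqrt (reC _)).
by rewrite trmx_mul map_mxM mulmxA -(mulmxA _ _ U) HU mulmx1.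
Qed.

Lemma nr_le_nsq x a : nr (x a 0) <= nsq x.
Proof.
rewrite /nsq (bigD1 a) //= lerDl; apply: sumr_ge0 => b _; exact: nr_ge0.
Qed.
End Vec.
End Norms.

Section Op.
Local Open Scope classical_set_scope.
Variable R : realType.
Variable n : nat.
Local Notation C := R[i].
Implicit Types M N : 'M[C]_n.

Definition opS M := [set r : R | exists x : 'cV[C]_n, vnorm x = 1 /\ r = vnorm (M *m x)].
Lemma opnormE M : opnorm M = sup (opS M). Proof. by []. Qed.

Lemma col_decomp M (x : 'cV[C]_n) : M *m x = \sum_(b < n) (x b 0) *: col b M.
Proof.
apply/matrixP => a c; rewrite ord1 !mxE summxE; apply: eq_bigr => b _.
by rewrite !mxE mulrC.
Qed.

Lemma sqrt_nr_le (x : 'cV[C]_n) b : Num.sqrt (nr (x b 0)) <= vnorm x.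
Proof. by rewrite vnormE ler_sqrt ?nsq_ge0 // nr_le_nsq. Qed.

Definition bnd M := \sum_(b < n) vnorm (col b M).
Lemma vnorm_bnd M x : vnorm (M *m x) <= bnd M * vnorm x.
Proof.
rewrite col_decomp; apply: le_trans (vnorm_sum _ _) _.
rewrite /bnd mulr_suml; apply: ler_sum => b _; rewrite vnorm_scale mulrC.
by apply: ler_wpM2l; [exact: vnorm_ge0 | exact: sqrt_nr_le].
Qed.

Lemma opS_ub M : has_ubound (opS M).
Proof. by exists (bnd M) => r [x [x1 ->]]; have := vnorm_bnd M x; rewrite x1 mulr1. Qed.

Lemma opS_empty M : ~ (opS M !=set0) -> opnorm M = 0.
Proof.
move=> h; rewrite opnormE.
have -> : opS M = set0 by apply/seteqP; split => r // Hr; exfalso; apply: h; exists r.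
exact: sup0.
Qed.

Lemma opnorm_ge0 M : 0 <= opnorm M.
Proof.
case: (pselect (opS M !=set0)) => [[r Hr]|h]; last by rewrite opS_empty.
apply: le_trans (ub_le_sup (opS_ub M) Hr).
by case: Hr => x [_ ->]; exact: vnorm_ge0.
Qed.

Lemma opnorm_le M x : vnorm (M *m x) <= opnorm M * vnorm x.
Proof.
have [v0|vpos] := eqVneq (vnorm x) 0.
  by rewrite v0 mulr0; have := vnorm_bnd M x; rewrite v0 mulr0.
set v := vnorm x in vpos *.
have vg : 0 < v by rewrite lt0r vpos vnorm_ge0.
have Hy : vnorm (v^-1%:C *: x) = 1.
  by rewrite vnorm_scale nr_real sqrtr_sqr ger0_norm ?invr_ge0 ?(ltW vg) // mulVf.
have : opS M (vnorm (M *m (v^-1%:C *: x))) by exists (v^-1%:C *: x).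
move=> /(ub_le_sup (opS_ub M)).
rewrite -scalemxAr vnorm_scale nr_real sqrtr_sqr ger0_norm ?invr_ge0 ?(ltW vg) // => h.
have -> : vnorm (M *m x) = v * (v^-1 * vnorm (M *m x)) by rewrite mulrA mulfV // mul1r.
by rewrite mulrC; apply: ler_wpM2r; [exact: (ltW vg) | exact: h].
Qed.

Lemma opnorm_leP M b : 0 <= b -> (forall x, vnorm (M *m x) <= b * vnorm x) -> opnorm M <= b.
Proof.
move=> b0 H.
case: (pselect (opS M !=set0)) => [ne|h]; last by rewrite opS_empty.
apply: ge_sup => // r [x [x1 ->]]; by have := H x; rewrite x1 mulr1.
Qed.

Lemma opnorm_mul M N : opnorm (M *m N) <= opnorm M * opnorm N.
Proof.
apply: opnorm_leP; first by rewrite mulr_ge0 ?opnorm_ge0.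
move=> x; rewrite -mulmxA; apply: le_trans (opnorm_le M _) _.
by rewrite -mulrA; apply: ler_wpM2l; [exact: opnorm_ge0 | exact: opnorm_le].
Qed.

Lemma opnorm_add M N : opnorm (M + N) <= opnorm M + opnorm N.
Proof.
apply: opnorm_leP; first by rewrite addr_ge0 ?opnorm_ge0.
move=> x; rewrite mulmxDl mulrDl; apply: le_trans (vnorm_triangle _ _) _.
by apply: lerD; exact: opnorm_le.
Qed.

Lemma opnorm_scale c M : opnorm (c *: M) <= Num.sqrt (nr c) * opnorm M.
Proof.
apply: opnorm_leP; first by rewrite mulr_ge0 ?opnorm_ge0 ?sqrtr_ge0.
move=> x; rewrite -scalemxAl vnorm_scale -mulrA.
by apply: ler_wpM2l; [exact: sqrtr_ge0 | exact: opnorm_le].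
Qed.

Lemma opnorm0 : opnorm (0 : 'M[C]_n) = 0.
Proof.
apply/eqP; rewrite eq_le opnorm_ge0 andbT; apply: opnorm_leP => // x.
by rewrite mul0mx vnorm0 mul0r.
Qed.

Lemma opnorm_opp M : opnorm (- M) <= opnorm M.
Proof.
have -> : - M = (-1) *: M by rewrite scaleN1r.
by apply: le_trans (opnorm_scale _ _) _; rewrite nrN /nr /= expr1n expr0n addr0 sqrtr1 mul1r.
Qed.

Lemma opnorm_sub M N : opnorm (M - N) <= opnorm M + opnorm N.
Proof. by apply: le_trans (opnorm_add _ _) _; rewrite lerD2l opnorm_opp. Qed.

Lemma opnorm_sum (I : Type) (s : seq I) (F : I -> 'M[C]_n) :
  opnorm (\sum_(i <- s) F i) <= \sum_(i <- s) opnorm (F i).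
Proof.
elim: s => [|i s IH]; first by rewrite !big_nil opnorm0.
by rewrite !big_cons; apply: le_trans (opnorm_add _ _) _; rewrite lerD2l.
Qed.

Lemma unitary_tC (U : 'M[C]_n) : U \is unitarymx -> U ^t* *m U = 1%:M.
Proof. by move=> /unitarymxP /mulmx1C. Qed.

Lemma opnorm_conj (U X : 'M[C]_n) : U \is unitarymx -> opnorm (U ^t* *m X *m U) <= opnorm X.
Proof.
move=> HU; apply: opnorm_leP; first exact: opnorm_ge0.
move=> x; rewrite -!mulmxA vnorm_unitary; last by rewrite trmxCK; apply/unitarymxP.
by have := opnorm_le X (U *m x); rewrite (@vnorm_unitary _ _ U x) ?unitary_tC.
Qed.

Lemma opnorm_diag (e : 'rV[C]_n) B : 0 <= B -> (forall j, nr (e 0 j) <= B ^+ 2) ->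
  opnorm (diag_mx e) <= B.
Proof.
move=> B0 He; apply: opnorm_leP => // x.
rewrite !vnormE -(ger0_norm B0) -sqrtr_sqr -sqrtrM ?sqr_ge0 // ler_sqrt ?mulr_ge0 ?sqr_ge0 ?nsq_ge0 //.
rewrite /nsq mulr_sumr; apply: ler_sum => j _.
rewrite mul_diag_mx mxE nrM; apply: ler_wpM2r; [exact: nr_ge0 | exact: He].
Qed.
End Op.

Section Spec.
Local Open Scope classical_set_scope.
Variable R : realType.
Variable n : nat.
Local Notation C := R[i].
Variable H : 'M[C]_n.
Hypothesis Hh : H \is hermsymmx.

Definition sP := spectralmx H.
Definition sd := spectral_diag H.
Definition dr (j : 'I_n) : R := reC (sd 0 j).

Lemma sP_unitary : sP \is unitarymx.
Proof. exact: spectral_unitarymx. Qed.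

Lemma sPP : sP *m sP ^t* = 1%:M.
Proof. by apply/unitarymxP; exact: sP_unitary. Qed.
Lemma sPtP : sP ^t* *m sP = 1%:M.
Proof. by apply: unitary_tC; exact: sP_unitary. Qed.

Lemma H_decomp : H = sP ^t* *m diag_mx sd *m sP.
Proof.
have /orthomx_spectralP := hermitian_normalmx Hh.
by rewrite invmx_unitary //; exact: sP_unitary.
Qed.

Lemma sd_real j : sd 0 j = (dr j)%:C.
Proof.
have /mxOverP /(_ 0 j) := hermitian_spectral_diag_real Hh.
move/CrealP => h; have := congr1 (@imC R) h; rewrite imCJ => e.
apply: C_ext; rewrite /dr ?reC_real ?imC_real //.
have : imC (sd 0 j) *+ 2 = 0 by rewrite mulr2n -{1}e addNr.
by move/eqP; rewrite mulrn_eq0 /= => /eqP.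

Qed.

Lemma delta_diag j (e : 'rV[C]_n) : (delta_mx 0 j : 'rV[C]_n) *m diag_mx e = e 0 j *: delta_mx 0 j.
Proof.
apply/matrixP => a b; rewrite ord1 mul_mx_diag !mxE eqxx /=.
by case: (eqVneq b j) => [->|nbj]; rewrite ?eqxx ?(negPf nbj) /= ?mul1r ?mulr1 ?mul0r ?mulr0.
Qed.

Lemma eig_d j : eigenvalue H (dr j)%:C.
Proof.
apply/eigenvalueP; exists ((delta_mx 0 j : 'rV[C]_n) *m sP).
  rewrite {1}H_decomp !mulmxA -(mulmxA _ sP) sPP mulmx1 delta_diag -scalemxAl sd_real //.
apply/negP => /eqP h.
have : (delta_mx 0 j : 'rV[C]_n) *m sP *m sP ^t* = 0 by rewrite h mul0mx.
rewrite -mulmxA sPP mulmx1 => /matrixP /(_ 0 j); rewrite !mxE !eqxx /=.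
by move=> /eqP; rewrite oner_eq0.
Qed.

Lemma eig_inv z : eigenvalue H z -> exists j, z = sd 0 j.
Proof.
move=> /eigenvalueP [v Hv vn0].
set w := v *m sP ^t*.
have Hw : w *m diag_mx sd = z *: w.
  have : v *m H *m sP ^t* = z *: v *m sP ^t* by rewrite Hv.
  by rewrite {1}H_decomp !mulmxA -(mulmxA _ sP) sPP mulmx1 -scalemxAl.
have wn0 : w != 0.
  apply/negP => /eqP w0; move/negP: vn0; apply.
  have <- : w *m sP = v by rewrite /w -mulmxA sPtP mulmx1.
  by rewrite w0 mul0mx.
clearbody w.
have [j wj] : exists j, w 0 j != 0.
  apply/existsP; rewrite -negb_forall; apply/negP => /forallP h.
  move/negP: wn0; apply; apply/eqP/matrixP => a b; by rewrite ord1 mxE; apply/eqP.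
exists j; move/matrixP: Hw => /(_ 0 j); rewrite mul_mx_diag !mxE mulrC => h.
by apply/(mulIf wj); rewrite -h.
Qed.

Lemma spec_in r : spec_real H r -> exists j, r = dr j.
Proof.
move=> /eig_inv [j hj]; exists j; rewrite /dr -hj; by [].
Qed.

Lemma spec_ub : has_ubound (spec_real H).
Proof.
exists (\sum_j `|dr j|) => r /spec_in [j ->].
apply: le_trans (ler_norm _) _; rewrite (bigD1 j) //= lerDl.
by apply: sumr_ge0 => k _; exact: normr_ge0.
Qed.

Lemma spec_lb : has_lbound (spec_real H).
Proof.
exists (- \sum_j `|dr j|) => r /spec_in [j ->].
rewrite lerNl; apply: le_trans (ler_norm _) _; rewrite normrN (bigD1 j) //= lerDl.
by apply: sumr_ge0 => k _; exact: normr_ge0.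
Qed.

Lemma dr_le_sup j : dr j <= sup (spec_real H).
Proof. by apply: (ub_le_sup spec_ub); exact: eig_d. Qed.
Lemma dr_ge_inf j : inf (spec_real H) <= dr j.
Proof. by apply: (ge_inf spec_lb); exact: eig_d. Qed.

Lemma omega_diff j l : dr j - dr l <= omega_max H.
Proof. by rewrite /omega_max; apply: lerB; [exact: dr_le_sup | exact: dr_ge_inf]. Qed.

Lemma omega_ge0 : 0 <= omega_max H.
Proof.
case: (posnP n) => [n0|npos].
  rewrite /omega_max.
  have -> : spec_real H = set0.
    by apply/seteqP; split => r // /spec_in [[j jn]]; exfalso; move: jn; rewrite n0.
  by rewrite sup0 inf0 subrr.
by have := omega_diff (Ordinal npos) (Ordinal npos); rewrite subrr.
Qed.

Lemma opnorm_n0 (M : 'M[C]_n) : n = 0%N -> opnorm M = 0.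
Proof.
move=> n0; apply: opS_empty => -[r [x [x1 _]]].
move: x1; rewrite vnormE /nsq big1 ?sqrtr0; first by move=> /eqP; rewrite eq_sym oner_eq0.
by move=> [j jn]; exfalso; move: jn; rewrite n0.
Qed.

Lemma comm_bound (X : 'M[C]_n) :
  opnorm (H *m X - X *m H) <= 2 * omega_max H * opnorm X.
Proof.
case: (posnP n) => [n0|npos]; first by rewrite !opnorm_n0 // mulr0.
set j0 : 'I_n := Ordinal npos.
set c := dr j0.
set e : 'rV[C]_n := \row_j (sd 0 j - c%:C).
have He : H - c%:C%:M = sP ^t* *m diag_mx e *m sP.
  have -> : diag_mx e = diag_mx sd - c%:C%:M.
    by apply/matrixP => a b; rewrite !mxE; case: (a == b); rewrite ?mulr1n ?mulr0n ?subr0.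
  by rewrite mulmxBr mulmxBl H_decomp mul_mx_scalar -scalemxAl sPtP scalemx1.
have Hb : opnorm (H - c%:C%:M) <= omega_max H.
  rewrite He; apply: le_trans (opnorm_conj _ sP_unitary) _.
  apply: opnorm_diag; first exact: omega_ge0.
  move=> j; rewrite mxE sd_real -rmorphB nr_real.
  rewrite -ler_sqrt ?sqr_ge0 // !sqrtr_sqr (ger0_norm omega_ge0) ler_norml.
  by rewrite lerNl opprB !omega_diff.
have -> : H *m X - X *m H = (H - c%:C%:M) *m X - X *m (H - c%:C%:M).
  by rewrite mulmxBl mulmxBr mul_scalar_mx mul_mx_scalar opprB addrA subrK.
apply: le_trans (opnorm_sub _ _) _.
have h1 := le_trans (opnorm_mul (H - c%:C%:M) X) (ler_wpM2r (opnorm_ge0 X) Hb).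
have h2 := le_trans (opnorm_mul X (H - c%:C%:M)) (ler_wpM2l (opnorm_ge0 X) Hb).
by apply: le_trans (lerD h1 h2) _; rewrite [opnorm X * _]mulrC -mulrA mulr_natl mulr2n.
Qed.

End Spec.

Section Exp.
Local Open Scope classical_set_scope.
Variable R : realType.
Local Notation C := R[i].

Definition Eexp (x : R) : C := cos x +i* (- sin x).
Definition psC (z : C) (N : nat) : C := \sum_(k < N) ((k`!)%:R)^-1 * z ^+ k.

Definition ccvg (z : nat -> C) (w : C) :=
  ((reC (z N)) @[N --> \oo] --> reC w) /\ ((imC (z N)) @[N --> \oo] --> imC w).

Lemma reC_rM (r : R) (z : C) : reC (r%:C * z) = r * reC z.
Proof. by rewrite reCM reC_real imC_real mul0r subr0. Qed.
Lemma imC_rM (r : R) (z : C) : imC (r%:C * z) = r * imC z.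
Proof. by rewrite imCM reC_real imC_real mul0r addr0. Qed.

Lemma ccvg_cst w : ccvg (fun=> w) w.
Proof. by split; apply: cvg_cst. Qed.

Lemma ccvg_add z1 z2 w1 w2 : ccvg z1 w1 -> ccvg z2 w2 ->
  ccvg (fun N => z1 N + z2 N) (w1 + w2).
Proof.
move=> [h1 h2] [h3 h4]; split.
  under eq_fun do rewrite reCD. by rewrite reCD; apply: cvgD.
under eq_fun do rewrite imCD. by rewrite imCD; apply: cvgD.
Qed.

Lemma ccvg_sum (I : Type) (s : seq I) (z : I -> nat -> C) (w : I -> C) :
  (forall i, ccvg (z i) (w i)) ->
  ccvg (fun N => \sum_(i <- s) z i N) (\sum_(i <- s) w i).
Proof.
move=> h; elim: s => [|i s IH].
  under eq_fun do rewrite big_nil. by rewrite big_nil; apply: ccvg_cst.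
under eq_fun do rewrite big_cons. by rewrite big_cons; apply: ccvg_add.
Qed.

Lemma ccvg_mulC (g : C) z w : ccvg z w -> ccvg (fun N => g * z N) (g * w).
Proof.
move=> [h1 h2]; split.
  under eq_fun do rewrite reCM. rewrite reCM.
  by apply: cvgB; apply: cvgMl_tmp.
under eq_fun do rewrite imCM. rewrite imCM.
by apply: cvgD; apply: cvgMl_tmp.
Qed.

Lemma ccvg_lim z w : ccvg z w ->
  limn (fun N => reC (z N)) +i* limn (fun N => imC (z N)) = w.
Proof.
by move=> [h1 h2]; rewrite (cvg_lim _ h1) ?(cvg_lim _ h2) //; case: w h1 h2.
Qed.

Lemma negix (x : R) : - ('i * x%:C) = 0 +i* (- x).
Proof. by apply: C_ext; rewrite ?reCN ?imCN ?reCM ?imCM /=; ring. Qed.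

Lemma powNi_even (x : R) m :
  reC ((- ('i * x%:C)) ^+ m.*2) = (-1) ^+ m * x ^+ m.*2 /\
  imC ((- ('i * x%:C)) ^+ m.*2) = 0.
Proof.
rewrite negix; elim: m => [|m [IH1 IH2]]; first by rewrite !expr0 mul1r.
rewrite doubleS !exprSr !(reCM, imCM) IH1 IH2 /=.
split; ring.
Qed.

Lemma powNi_odd (x : R) m :
  reC ((- ('i * x%:C)) ^+ m.*2.+1) = 0 /\
  imC ((- ('i * x%:C)) ^+ m.*2.+1) = - ((-1) ^+ m * x ^+ m.*2.+1).
Proof.
have [IH1 IH2] := powNi_even x m.
move: IH1 IH2; rewrite negix => IH1 IH2.
rewrite exprSr !(reCM, imCM) IH1 IH2 /= exprSr; split; ring.
Qed.

Lemma re_ps (x : R) k :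
  reC (((k`!)%:R)^-1 * (- ('i * x%:C)) ^+ k) = cos_coeff x k.
Proof.
have -> : ((k`!)%:R : C)^-1 = (((k`!)%:R : R)^-1)%:C by rewrite fmorphV rmorph_nat.
rewrite reC_rM /cos_coeff /=.
rewrite -[k](odd_double_half k); case: (odd k) => /=.
  by rewrite add1n (powNi_odd x k./2).1 odd_double /= !mul0r mulr0.
rewrite add0n (powNi_even x k./2).1 odd_double /= half_double mul1r mulrC.
by rewrite -exprnP.
Qed.

Lemma im_ps (x : R) k :
  imC (((k`!)%:R)^-1 * (- ('i * x%:C)) ^+ k) = - sin_coeff x k.
Proof.
have -> : ((k`!)%:R : C)^-1 = (((k`!)%:R : R)^-1)%:C by rewrite fmorphV rmorph_nat.
rewrite imC_rM /sin_coeff /=.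
rewrite -[k](odd_double_half k); case: (odd k) => /=.
  by rewrite add1n (powNi_odd x k./2).2 odd_double /= half_double mul1r; ring.
by rewrite add0n (powNi_even x k./2).2 odd_double /= !mul0r oppr0 mulr0.
Qed.

Lemma ccvg_exp (x : R) : ccvg (psC (- ('i * x%:C))) (Eexp x).
Proof.
split.
  have -> : (fun N => reC (psC (- ('i * x%:C)) N)) = series (cos_coeff x).
    apply/funext => N; rewrite /psC reC_sum /series /= big_mkord.
    by apply: eq_bigr => k _; rewrite re_ps.
  rewrite /Eexp /= unlock; exact: is_cvg_series_cos_coeff.
have -> : (fun N => imC (psC (- ('i * x%:C)) N)) = (fun N => - series (sin_coeff x) N).
  apply/funext => N; rewrite /psC imC_sum /series /= big_mkord.
  rewrite [RHS]/= -sumrN.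
  by apply: eq_bigr => k _; rewrite im_ps.
rewrite /Eexp /= unlock; apply: cvgN; exact: is_cvg_series_sin_coeff.
Qed.

End Exp.

Section ExpM.
Local Open Scope classical_set_scope.
Variable R : realType.
Variable n : nat.
Local Notation C := R[i].
Variable H : 'M[C]_n.
Hypothesis Hh : H \is hermsymmx.
Local Notation P := (sP H).

Lemma conj_entry (e : 'rV[C]_n) a b :
  (P ^t* *m diag_mx e *m P) a b = \sum_j (P ^t*) a j * e 0 j * P j b.
Proof. by rewrite mxE; apply: eq_bigr => j _; rewrite mul_mx_diag mxE. Qed.

Lemma diag_mul (e f : 'rV[C]_n) :
  diag_mx e *m diag_mx f = diag_mx (\row_j (e 0 j * f 0 j)).
Proof.
apply/matrixP => a b; rewrite mul_diag_mx !mxE.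
by case: (eqVneq a b) => [->|nab]; rewrite ?eqxx ?(negPf nab) ?mulr1n ?mulr0n ?mulr0.
Qed.

Lemma conj_mul (e f : 'rV[C]_n) :
  (P ^t* *m diag_mx e *m P) *m (P ^t* *m diag_mx f *m P) =
  P ^t* *m diag_mx (\row_j (e 0 j * f 0 j)) *m P.
Proof.
rewrite !mulmxA -(mulmxA _ P) (@sPP _ _ H) mulmx1 -(mulmxA _ (diag_mx e)) diag_mul.
by [].
Qed.

Definition cth (th : R) : C := - ('i * th%:C).

Lemma Mdecomp th : cth th *: H = P ^t* *m diag_mx (\row_j (cth th * sd H 0 j)) *m P.
Proof.
rewrite {1}(H_decomp Hh) scalemxAl scalemxAr; congr (_ *m _ *m _).
by apply/matrixP => a b; rewrite !mxE; case: (a == b); rewrite ?mulr1n ?mulr0n ?mulr0.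
Qed.

Lemma diag1 : diag_mx (\row_j (1 : C)) = 1%:M :> 'M[C]_n.
Proof. by apply/matrixP => a b; rewrite !mxE. Qed.

Lemma Mpow th k : (cth th *: H) ^+ k =
  P ^t* *m diag_mx (\row_j ((cth th * sd H 0 j) ^+ k)) *m P.
Proof.
elim: k => [|k IH].
  rewrite expr0.
  have -> : \row_j ((cth th * sd H 0 j) ^+ 0) = \row_j (1 : C).
    by apply/rowP => j; rewrite !mxE expr0.
  by rewrite diag1 mulmx1 (@sPtP _ _ H).
rewrite exprSr -mulmxE IH Mdecomp conj_mul; congr (_ *m diag_mx _ *m _).
by apply/rowP => j; rewrite !mxE exprSr.
Qed.

Lemma psum_entry th N a b :
  exp_psum (cth th *: H) N a b =
  \sum_j ((P ^t*) a j * P j b) * psC (- ('i * (th * dr H j)%:C)) N.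
Proof.
rewrite /exp_psum summxE.
under eq_bigr do rewrite mxE Mpow conj_entry mulr_sumr.
rewrite exchange_big /=; apply: eq_bigr => j _.
rewrite /psC mulr_sumr; apply: eq_bigr => k _; rewrite mxE.
have -> : cth th * sd H 0 j = - ('i * (th * dr H j)%:C).
  by rewrite (sd_real Hh) /cth rmorphM /= mulNr mulrA.
by rewrite mulrA mulrC !mulrA; congr (_ * _); rewrite mulrC mulrA.
Qed.

Lemma expm_decomp th :
  expm (cth th *: H) = P ^t* *m diag_mx (\row_j Eexp (th * dr H j)) *m P.
Proof.
apply/matrixP => a b; rewrite [LHS]mxE conj_entry.
apply: (ccvg_lim (z := fun N => exp_psum (cth th *: H) N a b)).
have -> : (fun N => exp_psum (cth th *: H) N a b) =
  (fun N => \sum_j ((P ^t*) a j * P j b) * psC (- ('i * (th * dr H j)%:C)) N).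
  by apply/funext => N; rewrite psum_entry.
have -> : \sum_j (P ^t*) a j * (\row_j0 Eexp (th * dr H j0)) 0 j * P j b =
          \sum_j ((P ^t*) a j * P j b) * Eexp (th * dr H j).
  by apply: eq_bigr => j _; rewrite mxE mulrAC.
apply: ccvg_sum => j; apply: ccvg_mulC; exact: ccvg_exp.
Qed.

End ExpM.

Section Der.
Variable R : realType.
Lemma isdM (f g : R -> R) (t df dg : R) : is_derive t 1 f df -> is_derive t 1 g dg ->
  is_derive t 1 (fun s => f s * g s) (f t * dg + g t * df).
Proof. move=> hf hg; exact: (is_deriveM hf hg). Qed.
Lemma isdD (f g : R -> R) (t df dg : R) : is_derive t 1 f df -> is_derive t 1 g dg ->
  is_derive t 1 (fun s => f s + g s) (df + dg).
Proof. move=> hf hg; exact: (is_deriveD hf hg). Qed.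
Lemma isdB (f g : R -> R) (t df dg : R) : is_derive t 1 f df -> is_derive t 1 g dg ->
  is_derive t 1 (fun s => f s - g s) (df - dg).
Proof. move=> hf hg; exact: (is_deriveB hf hg). Qed.
Lemma isdN (f : R -> R) (t df : R) : is_derive t 1 f df -> is_derive t 1 (fun s => - f s) (- df).
Proof. move=> hf; exact: (is_deriveN hf). Qed.
Lemma isdC (c t : R) : is_derive t 1 (fun _ : R => c) 0.
Proof. exact: is_derive_cst. Qed.
Lemma isd_cos (r t : R) : is_derive t 1 (fun s => cos (s * r)) (- sin (t * r) * r).
Proof.
have h : is_derive t 1 (fun s : R => s * r) r.
  by have := @isdM id (fun _ => r) t 1 0 (is_derive_id t 1) (isdC r t); rewrite mulr0 add0r mulr1.
exact: (is_derive1_comp (is_derive_cos _) h).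
Qed.
Lemma isd_sin (r t : R) : is_derive t 1 (fun s => sin (s * r)) (cos (t * r) * r).
Proof.
have h : is_derive t 1 (fun s : R => s * r) r.
  by have := @isdM id (fun _ => r) t 1 0 (is_derive_id t 1) (isdC r t); rewrite mulr0 add0r mulr1.
exact: (is_derive1_comp (is_derive_sin _) h).
Qed.
Implicit Types f g : R -> R[i].
Local Notation C := R[i].

Lemma isd_eq (f : R -> R) (t d d' : R) : is_derive t 1 f d -> d = d' -> is_derive t 1 f d'.
Proof. by move=> h <-. Qed.
Lemma isd_ext (f g : R -> R) (t d : R) : (forall s, f s = g s) -> is_derive t 1 f d -> is_derive t 1 g d.
Proof. by move=> e; have -> : f = g by apply/funext. Qed.

Definition cD (f : R -> C) (t : R) (z : C) :=
  is_derive t 1 (fun s => reC (f s)) (reC z) /\ is_derive t 1 (fun s => imC (f s)) (imC z).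

Lemma cD_eq f t z z' : cD f t z -> z = z' -> cD f t z'.
Proof. by move=> h <-. Qed.
Lemma cD_ext f g t z : (forall s, f s = g s) -> cD f t z -> cD g t z.
Proof. by move=> e; have -> : f = g by apply/funext. Qed.

Lemma cD_cst (w : C) t : cD (fun _ => w) t 0.
Proof. by split; apply: isdC. Qed.

Lemma cD_add f g t z w : cD f t z -> cD g t w -> cD (fun s => f s + g s) t (z + w).
Proof.
move=> [h1 h2] [h3 h4]; split.
  by apply: (isd_ext (f := fun s => reC (f s) + reC (g s))) => [s|]; rewrite ?reCD //; apply: isdD.
by apply: (isd_ext (f := fun s => imC (f s) + imC (g s))) => [s|]; rewrite ?imCD //; apply: isdD.
Qed.

Lemma cD_mul f g t z w : cD f t z -> cD g t w ->
  cD (fun s => f s * g s) t (z * g t + f t * w).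
Proof.
move=> [h1 h2] [h3 h4]; split.
  apply: (isd_ext (f := fun s => reC (f s) * reC (g s) - imC (f s) * imC (g s))) => [s|]; first by rewrite reCM.
  by apply: isd_eq; rewrite reCD !reCM /GRing.scale /=; ring.
apply: (isd_ext (f := fun s => reC (f s) * imC (g s) + imC (f s) * reC (g s))) => [s|]; first by rewrite imCM.
by apply: isd_eq; rewrite imCD !imCM /GRing.scale /=; ring.
Qed.

Lemma cD_sum (I : Type) (r : seq I) (F : I -> R -> C) t (dF : I -> C) :
  (forall i, cD (F i) t (dF i)) ->
  cD (fun s => \sum_(i <- r) F i s) t (\sum_(i <- r) dF i).
Proof.
move=> h; elim: r => [|i r IH].
  apply: (cD_ext (f := fun _ => 0)) => [s|]; first by rewrite big_nil.
  by rewrite big_nil; apply: cD_cst.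
apply: (cD_ext (f := fun s => F i s + \sum_(j <- r) F j s)) => [s|]; first by rewrite big_cons.
by rewrite big_cons; apply: cD_add.
Qed.

Lemma cD_conj f t z : cD f t z -> cD (fun s => (f s)^*) t (z^*).
Proof.
move=> [h1 h2]; split.
  by apply: (isd_ext (f := fun s => reC (f s))) => [s|]; rewrite ?reCJ.
apply: (isd_ext (f := fun s => - imC (f s))) => [s|]; first by rewrite imCJ.
by rewrite imCJ; apply: isdN.
Qed.

Lemma cD_Eexp (r t : R) :
  cD (fun s => Eexp (s * r)) t (- ('i * r%:C) * Eexp (t * r)).
Proof.
split.
  apply: (isd_eq (isd_cos r t)).
  by rewrite negix reCM /Eexp /=; ring.
apply: (isd_ext (f := fun s => - sin (s * r))) => [s|]; first by [].
apply: (isd_eq (isdN (isd_sin r t))).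
by rewrite negix imCM /Eexp /=; ring.
Qed.

Section MD.
Variable n : nat.
Definition mD (F : R -> 'M[C]_n) (t : R) (M : 'M[C]_n) :=
  forall a b, cD (fun s => F s a b) t (M a b).

Lemma mD_dmx F t M : mD F t M -> dmx F t = M.
Proof.
move=> h; apply/matrixP => a b; rewrite mxE; case: (h a b) => h1 h2.
by rewrite !derive1E (@derive_val _ _ _ _ _ _ _ h1) (@derive_val _ _ _ _ _ _ _ h2) -C_eta.
Qed.

Lemma mD_eq F t M M' : mD F t M -> M = M' -> mD F t M'.
Proof. by move=> h <-. Qed.
Lemma mD_ext F G t M : (forall s, F s = G s) -> mD F t M -> mD G t M.
Proof. by move=> e; have -> : F = G by apply/funext. Qed.

Lemma mD_cst (W : 'M[C]_n) t : mD (fun _ => W) t 0.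
Proof. by move=> a b; rewrite mxE; apply: cD_cst. Qed.

Lemma mD_add F G t F' G' : mD F t F' -> mD G t G' -> mD (fun s => F s + G s) t (F' + G').
Proof.
move=> h1 h2 a b; rewrite mxE.
by apply: (cD_ext (f := fun s => F s a b + G s a b)) => [s|]; rewrite ?mxE //; apply: cD_add.
Qed.

Lemma mD_sum (I : Type) (r : seq I) (F : I -> R -> 'M[C]_n) t (dF : I -> 'M[C]_n) :
  (forall i, mD (F i) t (dF i)) ->
  mD (fun s => \sum_(i <- r) F i s) t (\sum_(i <- r) dF i).
Proof.
move=> h a b; rewrite summxE.
apply: (cD_ext (f := fun s => \sum_(i <- r) F i s a b)) => [s|]; first by rewrite summxE.
by apply: cD_sum => i; exact: h.
Qed.

Lemma mD_mul F G t F' G' : mD F t F' -> mD G t G' ->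
  mD (fun s => F s *m G s) t (F' *m G t + F t *m G').
Proof.
move=> h1 h2 a b.
apply: (cD_ext (f := fun s => \sum_c F s a c * G s c b)) => [s|]; first by rewrite mxE.
apply: cD_eq; first by apply: cD_sum => c; apply: cD_mul; [exact: h1 | exact: h2].
by rewrite !mxE -big_split.
Qed.

Lemma mD_scale (c : C) F t F' : mD F t F' -> mD (fun s => c *: F s) t (c *: F').
Proof.
move=> h a b.
apply: (cD_ext (f := fun s => c * F s a b)) => [s|]; first by rewrite mxE.
apply: cD_eq; first by apply: cD_mul; [exact: cD_cst | exact: h].
by rewrite mxE mul0r add0r.
Qed.

Lemma mD_opp F t F' : mD F t F' -> mD (fun s => - F s) t (- F').
Proof.
move=> h; apply: (mD_ext (F := fun s => (-1) *: F s)) => [s|]; first by rewrite scaleN1r.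
by apply: mD_eq; [exact: (mD_scale (-1) h) | rewrite scaleN1r].
Qed.

Lemma mD_adj F t F' : mD F t F' -> mD (fun s => (F s) ^t*) t (F' ^t*).
Proof.
move=> h a b.
apply: (cD_ext (f := fun s => (F s b a)^*)) => [s|]; first by rewrite !mxE.
by rewrite !mxE; apply: cD_conj; exact: h.
Qed.

Lemma mD_diagE (r : 'I_n -> R) t :
  mD (fun s => diag_mx (\row_j Eexp (s * r j))) t
     (diag_mx (\row_j (- ('i * (r j)%:C) * Eexp (t * r j)))).
Proof.
move=> a b; rewrite !mxE.
case: (eqVneq a b) => [<-|nab].
  apply: (cD_ext (f := fun s => Eexp (s * r a))) => [s|]; first by rewrite !mxE eqxx mulr1n.
  by rewrite mulr1n; exact: cD_Eexp.
apply: (cD_ext (f := fun _ => 0)) => [s|]; first by rewrite !mxE (negPf nab) mulr0n.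
by rewrite mulr0n; exact: cD_cst.
Qed.

End MD.
End Der.

Section Main1.
Local Open Scope classical_set_scope.
Variable R : realType.
Variable n : nat.
Local Notation C := R[i].

Lemma herm_adj (H : 'M[C]_n) : H \is hermsymmx -> H ^t* = H.
Proof. by move=> Hh; have := is_hermitianmxP _ _ _ Hh; rewrite expr0 scale1r => e; rewrite {2}e. Qed.

Lemma adjZ (c : C) (M : 'M[C]_n) : (c *: M) ^t* = c^* *: M ^t*.
Proof. by apply/matrixP => a b; rewrite !mxE rmorphM. Qed.

Lemma adjM (M N : 'M[C]_n) : (M *m N) ^t* = N ^t* *m M ^t*.
Proof. by rewrite trmx_mul map_mxM. Qed.

Lemma conj_i : ('i : C)^* = - 'i.
Proof. by apply: C_ext; rewrite ?reCJ ?imCJ ?reCN ?imCN /= ?oppr0. Qed.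

Lemma nr_Eexp x : nr (Eexp x) = 1 :> R.
Proof. by rewrite /nr /Eexp /= sqrrN cos2Dsin2. Qed.

Lemma diagE_unitary (r : 'I_n -> R) : diag_mx (\row_j Eexp (r j)) \is unitarymx.
Proof.
apply/unitarymxP; apply/matrixP => a b; rewrite !mxE.
rewrite (bigD1 a) //= big1 => [|c nca]; last by rewrite !mxE eq_sym (negPf nca) mulr0n mul0r.
rewrite !mxE eqxx mulr1n addr0.
case: (eqVneq a b) => [<-|nab]; last by rewrite mulr0n rmorph0 mulr0.
rewrite !mulr1n mulrC conjM_nr nr_Eexp; by [].
Qed.

Variable H : 'M[C]_n.
Hypothesis Hh : H \is hermsymmx.

Lemma expm_unitary th : expm (cth th *: H) \is unitarymx.
Proof.
rewrite (expm_decomp Hh) mul_unitarymx //; first rewrite mul_unitarymx //.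
- by rewrite trmxC_unitary; exact: sP_unitary.
- exact: diagE_unitary.
- exact: sP_unitary.
Qed.

Lemma mD_expm x0 :
  mD (fun x => expm (cth x *: H)) x0 (expm (cth x0 *: H) *m (- 'i *: H)).
Proof.
apply: (mD_ext (F := fun x => (sP H ^t* *m diag_mx (\row_j Eexp (x * dr H j))) *m sP H)).
  by move=> s; rewrite (expm_decomp Hh).
apply: mD_eq.
  apply: mD_mul; last exact: mD_cst.
  apply: mD_mul; first exact: mD_cst.
  exact: mD_diagE.
rewrite mulmx0 addr0 mul0mx add0r (expm_decomp Hh).
have -> : - 'i *: H = cth 1 *: H by rewrite /cth mulr1.
rewrite (Mdecomp Hh) conj_mul; congr (_ *m diag_mx _ *m _).
apply/rowP => j; rewrite !mxE (sd_real Hh) /cth mulr1 mulrC mulNr; by [].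
Qed.

End Main1.

Section Main.
Local Open Scope classical_set_scope.
Variable R : realType.
Variables n K : nat.
Local Notation C := R[i].
Variables (H V : 'I_K -> 'M[C]_n) (S : 'I_K -> 'I_2) (A : 'M[C]_n).
Hypothesis Hh : forall k, H k \is hermsymmx.
Hypothesis Vu : forall k, V k \is unitarymx.

Definition Uk (th : 'I_2 -> R) k : 'M[C]_n := V k *m expm (cth (th (S k)) *: H k).

Lemma Uk_unitary th k : Uk th k \is unitarymx.
Proof. by rewrite mul_unitarymx //; exact: expm_unitary. Qed.

Definition upd (th : 'I_2 -> R) (s : 'I_2) (x : R) : 'I_2 -> R :=
  fun j => if j == s then x else th j.

Lemma mD_Uk th s k x0 : mD (fun x => Uk (upd th s x) k) x0
   (if S k == s then Uk (upd th s x0) k *m (- 'i *: H k) else 0).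
Proof.
case: (eqVneq (S k) s) => [e|ne].
  apply: (mD_ext (F := fun x => V k *m expm (cth x *: H k))) => [x|]; first by rewrite /Uk /upd e eqxx.
  apply: mD_eq; first by apply: mD_mul; [exact: mD_cst | exact: (mD_expm (Hh k))].
  by rewrite mul0mx add0r /Uk /upd e eqxx mulmxA.
apply: (mD_ext (F := fun _ => Uk th k)) => [x|]; first by rewrite /Uk /upd (negPf ne).
exact: mD_cst.
Qed.

Definition iad k (X : 'M[C]_n) := 'i *: (H k *m X - X *m H k).

Lemma iad_add k X Y : iad k (X + Y) = iad k X + iad k Y.
Proof. by rewrite /iad mulmxDr mulmxDl -scalerDr opprD addrACA. Qed.
Lemma iad0 k : iad k 0 = 0.
Proof. by rewrite /iad mulmx0 mul0mx subrr scaler0. Qed.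
Lemma iter_iad_add j k X Y : iter j (iad k) (X + Y) = iter j (iad k) X + iter j (iad k) Y.
Proof. by elim: j => //= j ->; rewrite iad_add. Qed.
Lemma iter_iad0 j k : iter j (iad k) 0 = 0.
Proof. by elim: j => //= j ->; rewrite iad0. Qed.

Lemma mD_iad k F t F' : mD F t F' -> mD (fun s => iad k (F s)) t (iad k F').
Proof.
move=> h; apply: mD_scale.
apply: (mD_ext (F := fun s => H k *m F s + - (F s *m H k))) => [s|]; first by [].
apply: mD_eq; first by apply: mD_add; [|apply: mD_opp]; apply: mD_mul => //; exact: mD_cst.
by rewrite mul0mx add0r mulmx0 addr0.
Qed.

Lemma mD_iter j k F t F' : mD F t F' ->
  mD (fun s => iter j (iad k) (F s)) t (iter j (iad k) F').
Proof. by elim: j => //= j IH h; apply: mD_iad; apply: IH. Qed.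

Lemma opnorm_iad k X : opnorm (iad k X) <= 2 * omega_max (H k) * opnorm X.
Proof.
apply: le_trans (opnorm_scale _ _) _; rewrite nr_i sqrtr1 mul1r.
exact: comm_bound.
Qed.

Lemma opnorm_iter j k X : opnorm (iter j (iad k) X) <= (2 * omega_max (H k)) ^+ j * opnorm X.
Proof.
elim: j => [|j IH] /=; first by rewrite expr0 mul1r.
apply: le_trans (opnorm_iad _ _) _; rewrite exprS -[_ * _ ^+ j * _]mulrA.
apply: ler_wpM2l => //; rewrite mulr_ge0 //; exact: omega_ge0.
Qed.

Definition step (m : 'I_K -> nat) th (X : 'M[C]_n) k :=
  iter (m k) (iad k) ((Uk th k) ^t* *m X *m Uk th k).
Definition PsiX m (r : seq 'I_K) th X := foldl (fun Y k => step m th Y k) X r.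
Definition bump (m : 'I_K -> nat) j := fun k => (m k + (k == j))%N.

Lemma step_add m th X Y k : step m th (X + Y) k = step m th X k + step m th Y k.
Proof. by rewrite /step mulmxDr mulmxDl iter_iad_add. Qed.
Lemma step0 m th k : step m th 0 k = 0.
Proof. by rewrite /step mulmx0 mul0mx iter_iad0. Qed.

Lemma PsiX_add m r th X Y : PsiX m r th (X + Y) = PsiX m r th X + PsiX m r th Y.
Proof. by elim: r X Y => //= k r IH X Y; rewrite step_add IH. Qed.
Lemma PsiX0 m r th : PsiX m r th 0 = 0.
Proof. by elim: r => //= k r IH; rewrite step0. Qed.

Lemma PsiX_eqm m m' r th X : (forall j, j \in r -> m j = m' j) ->
  PsiX m r th X = PsiX m' r th X.
Proof.
elim: r X => //= k r IH X h; rewrite /step h ?mem_head //.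
by apply: IH => j jr; apply: h; rewrite in_cons jr orbT.
Qed.

Lemma opnorm_step m th X k :
  opnorm (step m th X k) <= (2 * omega_max (H k)) ^+ m k * opnorm X.
Proof.
apply: le_trans (opnorm_iter _ _ _) _; apply: ler_wpM2l.
  by rewrite exprn_ge0 // mulr_ge0 //; exact: omega_ge0.
exact: opnorm_conj (Uk_unitary _ _).
Qed.

Lemma opnorm_PsiX m r th X :
  opnorm (PsiX m r th X) <= (\prod_(k <- r) (2 * omega_max (H k)) ^+ m k) * opnorm X.
Proof.
elim: r X => [|k r IH] X /=; first by rewrite big_nil mul1r.
apply: le_trans (IH _) _; rewrite big_cons [_ ^+ _ * _]mulrC -mulrA.
apply: ler_wpM2l; last exact: opnorm_step.
by apply: prodr_ge0 => j _; rewrite exprn_ge0 // mulr_ge0 //; exact: omega_ge0.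
Qed.


Lemma mD_step m th s k X t X' :
  mD X t X' -> mD (fun x => step m (upd th s x) (X x) k) t
     (step m (upd th s t) X' k +
      (if S k == s then step (bump m k) (upd th s t) (X t) k else 0)).
Proof.
move=> hX.
have hU := mD_Uk th s k t.
have hZ := mD_iter (m k) k (mD_mul (mD_mul (mD_adj hU) hX) hU).
apply: mD_eq hZ _.
rewrite /step; set U0 := Uk (upd th s t) k.
case: (eqVneq (S k) s) => [e|ne]; last first.
  by rewrite trmx0 map_mx0 mul0mx add0r mulmx0 addr0 addr0.
rewrite /bump eqxx addn1 iterSr -iter_iad_add; congr iter.
rewrite adjM adjZ (herm_adj (Hh k)).
have ci : (- 'i : C)^* = 'i by apply: C_ext; rewrite ?reCJ ?imCJ ?reCN ?imCN /= ?oppr0 ?opprK.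
rewrite ci mulmxDl.
have -> : ('i *: H k *m U0 ^t* *m X t) *m U0 = 'i *: (H k *m (U0 ^t* *m X t *m U0)).
  by rewrite -!scalemxAl !mulmxA.
have -> : U0 ^t* *m X t *m (U0 *m (- 'i *: H k)) = 'i *: - ((U0 ^t* *m X t *m U0) *m H k).
  by rewrite mulmxA -scalemxAr scaleNr scalerN.
by rewrite /iad scalerDr addrAC addrC.
Qed.

Lemma mD_PsiX r m th s t X X' : uniq r -> mD X t X' ->
  mD (fun x => PsiX m r (upd th s x) (X x)) t
     (PsiX m r (upd th s t) X' +
      \sum_(j <- r | S j == s) PsiX (bump m j) r (upd th s t) (X t)).
Proof.
elim: r m X X' => [|k r IH] m X X' /=.
  by move=> _ hX; rewrite big_nil addr0.
move=> /andP[kr ur] hX.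
have hY := mD_step m th s k hX.
apply: mD_eq (IH m _ _ ur hY) _.
rewrite big_cons PsiX_add.
have eq1 : PsiX (bump m k) r (upd th s t) = PsiX m r (upd th s t).
  apply/funext => Y; apply: PsiX_eqm => j jr; rewrite /bump.
  have -> : (j == k) = false by apply/negP => /eqP ejk; move: kr; rewrite -ejk jr.
  by rewrite addn0.
have eq2 : \sum_(j <- r | S j == s) PsiX (bump m j) r (upd th s t) (step m (upd th s t) (X t) k) =
           \sum_(j <- r | S j == s) PsiX (bump m j) r (upd th s t) (step (bump m j) (upd th s t) (X t) k).
  rewrite big_seq_cond [RHS]big_seq_cond; apply: eq_bigr => j /andP[jr _].
  rewrite /step /bump.
  have -> : (k == j) = false by apply/negP => /eqP ejk; move: kr; rewrite ejk jr.
  by rewrite addn0.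
case: (S k == s); last by rewrite PsiX0 addr0 eq2.
by rewrite eq1 eq2 addrA.
Qed.

Definition r0 := index_enum 'I_K.
Definition FL (L : seq ('I_K -> nat)) th := \sum_(m <- L) PsiX m r0 th A.
Definition stepL s (L : seq ('I_K -> nat)) :=
  [seq bump m j | m <- L, j <- [seq j <- r0 | S j == s]].

Lemma mD_FL L th s t : mD (fun x => FL L (upd th s x)) t (FL (stepL s L) (upd th s t)).
Proof.
apply: mD_eq.
  apply: mD_sum => m; apply: (mD_PsiX m th s (X := fun _ => A)); first exact: index_enum_uniq.
  exact: mD_cst.
rewrite /FL /stepL big_allpairs_dep /=; apply: eq_bigr => m _.
by rewrite PsiX0 add0r big_filter.
Qed.

Definition mk (t1 t2 : R) : 'I_2 -> R := fun j => if j == ord0 then t1 else t2.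

Lemma mk_upd1 t1 t2 x : mk x t2 = upd (mk t1 t2) ord0 x.
Proof. by apply/funext => j; rewrite /mk /upd; case: (j == ord0). Qed.

Lemma mk_upd2 t1 t2 x : mk t1 x = upd (mk t1 t2) ord_max x.
Proof.
apply/funext => j; rewrite /mk /upd.
by case: j => [[|[|j]]] //= jl.
Qed.

Lemma pd1_FL L : pd1 (fun t1 t2 => FL L (mk t1 t2)) = fun t1 t2 => FL (stepL ord0 L) (mk t1 t2).
Proof.
apply/funext => t1; apply/funext => t2; rewrite /pd1.
rewrite (_ : (fun s => FL L (mk s t2)) = fun s => FL L (upd (mk t1 t2) ord0 s)); last first.
  by apply/funext => s; rewrite (mk_upd1 t1).
by rewrite (mD_dmx (mD_FL _ _ _ _)) -mk_upd1.
Qed.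

Lemma pd2_FL L : pd2 (fun t1 t2 => FL L (mk t1 t2)) = fun t1 t2 => FL (stepL ord_max L) (mk t1 t2).
Proof.
apply/funext => t1; apply/funext => t2; rewrite /pd2.
rewrite (_ : (fun s => FL L (mk t1 s)) = fun s => FL L (upd (mk t1 t2) ord_max s)); last first.
  by apply/funext => s; rewrite (mk_upd2 t1 t2).
by rewrite (mD_dmx (mD_FL _ _ _ _)) -mk_upd2.
Qed.

Lemma PsiX_cons m k r th X : PsiX m (k :: r) th X = PsiX m r th (step m th X k).
Proof. by []. Qed.
Lemma step_m0 th X k : step (fun _ => 0%N) th X k = (Uk th k) ^t* *m X *m Uk th k.
Proof. by []. Qed.

Lemma PsiX0_prod r th X :
  PsiX (fun _ => 0%N) r th X = (\prod_(k <- r) Uk th k) ^t* *m X *m \prod_(k <- r) Uk th k.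
Proof.
elim: r X => [|k r IH] X.
  by rewrite big_nil trmx1 map_mx1 mul1mx mulmx1.
rewrite PsiX_cons IH step_m0 big_cons -mulmxE adjM !mulmxA.
by [].
Qed.

Lemma chan_FL : chan H V S A = fun t1 t2 => FL [:: fun _ => 0%N] (mk t1 t2).
Proof.
apply/funext => t1; apply/funext => t2.
rewrite /FL big_seq1 PsiX0_prod /chan /Uop.
have -> : \prod_(k < K) (V k * expm ((- ('i * (if S k == ord0 then t1 else t2)%:C)) *: H k)) =
          \prod_(k <- r0) Uk (mk t1 t2) k.
  by rewrite /r0; apply: eq_bigr => k _; rewrite /Uk -mulmxE.
by [].
Qed.

Lemma iter_pd2 p : iter p (@pd2 _ n) (chan H V S A) =
  fun t1 t2 => FL (iter p (stepL ord_max) [:: fun _ => 0%N]) (mk t1 t2).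
Proof. by elim: p => [|p IH]; [exact: chan_FL | rewrite iterS IH pd2_FL]. Qed.

Lemma iter_pd1 p L : iter p (@pd1 _ n) (fun t1 t2 => FL L (mk t1 t2)) =
  fun t1 t2 => FL (iter p (stepL ord0) L) (mk t1 t2).
Proof. by elim: p => [|p IH] //; rewrite iterS IH pd1_FL. Qed.

Definition w (m : 'I_K -> nat) : R := \prod_(k <- r0) (2 * omega_max (H k)) ^+ m k.

Lemma opnorm_FL L th : opnorm (FL L th) <= (\sum_(m <- L) w m) * opnorm A.
Proof.
apply: le_trans (opnorm_sum _ _) _; rewrite mulr_suml; apply: ler_sum => m _.
exact: opnorm_PsiX.
Qed.

Lemma prod_delta (c : 'I_K -> R) j : \prod_(k <- r0) c k ^+ (k == j) = c j.
Proof.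
rewrite /r0 (bigD1 j) //= eqxx expr1 big1 ?mulr1 // => k nkj.
by rewrite (negPf nkj) expr0.
Qed.

Lemma w_bump m j : w (bump m j) = w m * (2 * omega_max (H j)).
Proof.
rewrite /w /bump; under eq_bigr do rewrite exprD.
rewrite big_split; congr (_ * _).
exact: (prod_delta (fun k => 2 * omega_max (H k))).
Qed.

Lemma w0 : w (fun _ => 0%N) = 1.
Proof. by rewrite /w big1 // => k _; rewrite expr0. Qed.

Lemma sum_stepL s L : \sum_(m <- stepL s L) w m =
  (\sum_(l < K | S l == s) 2 * omega_max (H l)) * \sum_(m <- L) w m.
Proof.
rewrite /stepL big_allpairs_dep mulr_sumr; apply: eq_bigr => m _.
rewrite big_filter mulrC mulr_sumr; apply: eq_bigr => j _.
by rewrite w_bump.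
Qed.

Lemma sum_iter s p L : \sum_(m <- iter p (stepL s) L) w m =
  (\sum_(l < K | S l == s) 2 * omega_max (H l)) ^+ p * \sum_(m <- L) w m.
Proof.
elim: p => [|p IH]; first by rewrite expr0 mul1r.
by rewrite iterS sum_stepL IH exprS mulrA.
Qed.

End Main.


End Helpers.
Import Helpers.
Import Order.TTheory.

Theorem lemma7 (R : realType) (n K : nat) (H V : 'I_K -> 'M[R[i]]_n)
  (S : 'I_K -> 'I_2) (A : 'M[R[i]]_n) :
  (forall k, H k \is hermsymmx) ->
  (forall k, V k \is unitarymx) ->
  forall (p1 p2 : nat) (phi1 phi2 : R),
    opnorm (pderiv p1 p2 (chan H V S A) phi1 phi2)
    <= (\sum_(l < K | S l == ord0) 2 * omega_max (H l)) ^+ p1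
       * (\sum_(l < K | S l == ord_max) 2 * omega_max (H l)) ^+ p2
       * opnorm A.
Proof.
move=> Hh Vu p1 p2 phi1 phi2.
rewrite /pderiv (iter_pd2 V S A Hh) (iter_pd1 V S A Hh).
apply: le_trans (opnorm_FL S A Hh Vu _ _) _.
by rewrite !sum_iter big_seq1 w0 mulr1.
Qed.
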